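(* Let $f: (\mathbb{R}^{+})^n \to (\mathbb{R}^{+})^n$ be homogeneous and monotone, and suppose its recession function $\hat f$ exists. Suppose the only eigenvectors of $\hat f$ in $(\mathbb{R}^{+})^n$ are the positive scalar multiples of $(1,\dots,1)$. Then for all $\lambda,\mu \in \mathbb{R}^{+}$ the slice space $S^\lambda_\mu(f) = \{x \in (\mathbb{R}^{+})^n : \mu x \le f(x) \le \lambda x\}$ is bounded in the Hilbert projective metric.
   Context: Homogeneous: $f(\lambda x) = \lambda f(x)$ for $\lambda>0$; monotone: $x\le y$ componentwise implies $f(x)\le f(y)$. The recession function exists if for each $x \in (\mathbb{R}^{+})^n$ the limit $\hat f(x) = \lim_{k\to\infty} f(x_1^k,\dots,x_n^k)^{1/k}$ (the $k$-th root taken componentwise) exists in $(\mathbb{R}^{+})^n$. An eigenvector of a map $g$ is $x$ with $g(x) = \lambda x$ for some $\lambda>0$. Hilbert projective metric: $d_H(y,z) = \max_i \log(y_i/z_i) - \min_i \log(y_i/z_i)$; $A$ is bounded if $\sup_{y,z\in A} d_H(y,z)<\infty$. *)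

(* Defs.v *)
From HB Require Import structures.
From mathcomp Require Import all_boot all_order all_algebra.
From mathcomp Require Import all_classical all_reals all_analysis.
Set Implicit Arguments. Unset Strict Implicit. Unset Printing Implicit Defensive.
Import Order.TTheory GRing.Theory Num.Theory.
Import numFieldNormedType.Exports.
Local Open Scope classical_set_scope.
Local Open Scope ring_scope.

Section Defs.
Context {R : realType} {n : nat}.
Notation vec := ('I_n -> R).

Definition posvec (x : vec) : Prop := forall i, 0 < x i.

Definition maps_pos (f : vec -> vec) : Prop :=
  forall x, posvec x -> posvec (f x).

Definition homogeneous_vec (f : vec -> vec) : Prop :=
  forall x (l : R), posvec x -> 0 < l -> f (fun i => l * x i) = (fun i => l * f x i).

Definition monotone_vec (f : vec -> vec) : Prop :=
  forall x y, posvec x -> posvec y -> (forall i, x i <= y i) -> forall i, f x i <= f y i.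

Definition is_recession (f hf : vec -> vec) : Prop :=
  forall x, posvec x ->
    posvec (hf x) /\
    forall j, (fun k : nat => (f (fun i => x i ^+ k) j) `^ (k%:R^-1)) @ \oo --> hf x j.

Definition is_eigvec (g : vec -> vec) (x : vec) : Prop :=
  posvec x /\ exists l : R, 0 < l /\ g x = (fun i => l * x i).

(* Hilbert projective metric: max_i log(y_i/z_i) - min_i log(y_i/z_i),
   written as max over pairs (i,j) of log(y_i/z_i) - log(y_j/z_j)
   (equal for n >= 1; the 0 seed is harmless as the diagonal terms are 0). *)
Definition dH (y z : vec) : R :=
  \big[Num.max/0]_(i < n) \big[Num.max/0]_(j < n)
     (ln (y i / z i) - ln (y j / z j)).

Definition slice (f : vec -> vec) (lam mu : R) : set vec :=
  [set x | posvec x /\ (forall i, mu * x i <= f x i) /\ (forall i, f x i <= lam * x i)].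

Definition hbounded (A : set vec) : Prop :=
  exists M : R, forall y z, A y -> A z -> dH y z <= M.

End Defs.

(* Main.v *)
Set Warnings "-all".
Require Import Defs.
From HB Require Import structures.
From mathcomp Require Import all_boot all_order all_algebra.
From mathcomp Require Import all_classical all_reals all_analysis.
From mathcomp Require Import lra.
Import Order.TTheory GRing.Theory Num.Theory.
Import numFieldNormedType.Exports.
Local Open Scope classical_set_scope.
Local Open Scope ring_scope.

Lemma cluster_ex {R : realType} {n : nat} (S : nat -> set 'rV[R]_n) :
  (forall N, S N !=set0) -> (forall N M, (N <= M)%N -> S M `<=` S N) ->
  (forall N w, S N w -> forall i, 0 <= w ord0 i <= 1) ->
  exists w : 'rV[R]_n, (forall i, 0 <= w ord0 i <= 1) /\
    forall N (d : R), 0 < d -> exists w', S N w' /\ forall i, `|w ord0 i - w' ord0 i| < d.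
Proof.
move=> Sne Sdec Sb.
pose F := filter_from [set: nat] S.
have FF : Filter F.
  apply: filter_from_filter; first by exists 0%N.
  move=> a b _ _; exists (maxn a b) => //.
  by move=> w Sw; split; apply: Sdec Sw; rewrite ?leq_maxl ?leq_maxr.
have PF : ProperFilter F by apply: filter_from_proper => N _; apply: Sne.
pose A := [set v : 'rV[R]_n | forall i, (fun _ : 'I_n => `[(0:R), 1]%classic) i (v ord0 i)].
have cA : compact A by apply: rV_compact => i; apply: segment_compact.
have FA : F A.
  exists 0%N => // w /Sb Hw i /=; rewrite in_itv /=; exact: Hw.
have [w [Aw clw]] := cA F PF FA.
exists w; split.
  by move=> i; have := Aw i; rewrite /= in_itv.
move=> N d d0.
have [w' [Sw' bw']] := clw (S N) (ball w d) (ex_intro2 _ _ N I (fun x h => h)) (nbhsx_ballx w d d0).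
exists w'; split => // i.
move: bw' => [_ /(_ ord0 i)].
rewrite /ball /=.
done.
Qed.

Section Helpers.
Context {R : realType} {n : nat}.
Variable f : ('I_n -> R) -> ('I_n -> R).
Hypothesis Hpos : maps_pos f.
Hypothesis Hh : homogeneous_vec f.
Hypothesis Hm : monotone_vec f.

Lemma hom_mono (x y : 'I_n -> R) (c : R) : posvec x -> posvec y -> 0 < c ->
  (forall i, x i <= c * y i) -> forall j, f x j <= c * f y j.
Proof.
move=> px py c0 H j.
have pcy : posvec (fun i => c * y i) by move=> i; apply: mulr_gt0.
have := Hm x (fun i => c * y i) px pcy H j.
by rewrite (Hh y c py c0).
Qed.

Lemma slice_scale lam mu (x : 'I_n -> R) (l : R) : 0 < l ->
  slice f lam mu x -> slice f lam mu (fun i => l * x i).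
Proof.
move=> l0 [px [H1 H2]]; split; first by move=> i; apply: mulr_gt0.
rewrite (Hh x l px l0); split => i /=.
  by rewrite mulrCA ler_pM2l.
by rewrite mulrCA ler_pM2l.
Qed.

Lemma ln_le_of (p s : R) : 0 < p -> p <= expR s -> ln p <= s.
Proof.
move=> p0 H; rewrite -[s in _ <= s]expRK ler_ln ?posrE ?expR_gt0 //.
Qed.

Lemma le_ln_of (p s : R) : 0 < p -> expR s <= p -> s <= ln p.
Proof.
move=> p0 H; rewrite -[s in s <= _]expRK ler_ln ?posrE ?expR_gt0 //.
Qed.

Lemma argmin_ex (u : 'I_n -> R) (i : 'I_n) : exists i0, forall k, u i0 <= u k.
Proof.
pose M := \big[Order.max/u i]_(k : 'I_n) u k.
have [i0 _ E] := @eq_bigmin _ R 'I_n M i xpredT u isT (fun k _ => le_bigmax _ _ _).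
by exists i0 => k; rewrite -E; apply: bigmin_le.
Qed.

Lemma argmax_ex (u : 'I_n -> R) (i : 'I_n) : exists i0, forall k, u k <= u i0.
Proof.
pose M := \big[Order.min/u i]_(k : 'I_n) u k.
have [i0 _ E] := @eq_bigmax _ R 'I_n M i xpredT u isT (fun k _ => bigmin_le _ _ _).
by exists i0 => k; rewrite -E; apply: le_bigmax.
Qed.


Lemma ln_le (a b : R) : 0 < a -> a <= b -> ln a <= ln b.
Proof. by move=> a0 ab; rewrite ler_ln ?posrE // (lt_le_trans a0 ab). Qed.

Variable hf : ('I_n -> R) -> ('I_n -> R).
Hypothesis Hrec : is_recession f hf.
Hypothesis Heig : forall x, is_eigvec hf x -> exists c : R, 0 < c /\ x = (fun _ => c).
Variables lam mu : R.
Hypothesis lam0 : 0 < lam.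
Hypothesis mu0 : 0 < mu.

Lemma osc_bound : exists B, forall x, slice f lam mu x ->
  forall i j, ln (x i) - ln (x j) <= B.
Proof.
apply: contrapT => nH.
pose E (m : R) (w : 'rV[R]_n) := fun i => expR (m * w ord0 i).
pose S := fun N : nat => [set w : 'rV[R]_n | (forall i, 0 <= w ord0 i <= 1) /\
   (exists i j, w ord0 i = 0 /\ 2^-1 <= w ord0 j) /\
   exists m : nat, (N <= m)%N /\ (0 < m)%N /\ slice f lam mu (E m%:R w)].
have Sne : forall N, S N !=set0.
  move=> N.
  have [x [sx [i [j Hij]]]] : exists x, slice f lam mu x /\
      exists i j, N%:R + 1 < ln (x i) - ln (x j).
    apply: contrapT => H; apply: nH; exists (N%:R + 1) => x sx i j.
    rewrite leNgt; apply/negP => Hlt; apply: H; exists x; split => //.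
    by exists i, j.
  pose u := fun k => ln (x k).
  have [i0 Hi0] := argmin_ex u i.
  have [j0 Hj0] := argmax_ex u i.
  pose t := u j0 - u i0.
  have ht : N%:R + 1 < t.
    have := Hi0 j; have := Hj0 i; rewrite /t /u; lra.
  have t0 : 0 <= t by have : (0:R) <= N%:R by []; lra.
  pose m := (Num.trunc t).+1.
  have /andP [tr1 tr2] := truncn_itv t0.
  have mR : m%:R = (Num.trunc t)%:R + 1 :> R by rewrite /m -natr1.
  have m0 : 0 < m%:R :> R by rewrite ltr0n.
  have tm : t < m%:R by rewrite mR; lra.
  have mt : m%:R <= t + 1 by rewrite mR; lra.
  exists (\row_k ((u k - u i0) / m%:R)); split; [|split].
  - move=> k; rewrite mxE; apply/andP; split.
      by apply: divr_ge0; [rewrite subr_ge0 Hi0|apply: ltW].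
    rewrite ler_pdivrMr // mul1r.
    have := Hj0 k; rewrite /t in tm; lra.
  - exists i0, j0; rewrite !mxE subrr mul0r; split => //.
    rewrite ler_pdivlMr //; rewrite -/t.
    have : (1:R) <= t by have : (0:R) <= N%:R by []; lra.
    lra.
  - exists m; split; [|split] => //.
      rewrite leqW // leqNgt truncn_lt_nat // -leNgt.
      lra.
    have -> : E m%:R (\row_k ((u k - u i0) / m%:R)) = (fun k => expR (- u i0) * x k).
      apply: funext => k; rewrite /E mxE mulrC divfK ?gt_eqF //.
      rewrite expRD lnK ?posrE; last by case: sx => px _; exact: px.
      by rewrite mulrC.
    by apply: slice_scale => //; apply: expR_gt0.
have Sdec : forall N M, (N <= M)%N -> S M `<=` S N.
  move=> N M NM w [? [? [m [Mm ?]]]]; split => //; split => //.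
  by exists m; split => //; apply: leq_trans Mm.
have Sb : forall N w, S N w -> forall i, 0 <= w ord0 i <= 1 by move=> N w [].
have [w [wb app]] := @cluster_ex R n S Sne Sdec Sb.
pose x := fun i => expR (w ord0 i).
have px : posvec x by move=> i; apply: expR_gt0.
have hfx : forall j, hf x j = x j.
  move=> j.
  have [hpos hcv] := Hrec x px.
  set L := hf x j; have hL : 0 < L := hpos j.
  pose g := fun k : nat => (f (fun i => x i ^+ k) j) `^ (k%:R^-1).
  have C : forall d eta : R, 0 < d -> 0 < eta -> exists m : nat,
      `|L - g m| < eta /\ expR (w ord0 j - d) <= g m <= expR (w ord0 j + d).
    move=> d eta d0 eta0.
    have := (cvgrPdist_lt _ _).1 (hcv j) eta eta0.
    move=> [Nc _ HNc].
    pose K := `|ln lam| + `|ln mu|.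
    pose d3 := d / 3.
    have d30 : 0 < d3 by apply: divr_gt0.
    pose N := maxn Nc (Num.trunc (K / d3)).+1.
    have [w' [Sw' Hw']] := app N d3 d30.
    move: Sw' => [_ [_ [m [Nm [m0 sl]]]]].
    exists m; split.
      by apply: (HNc m) => /=; apply: leq_trans Nm; apply: leq_maxl.
    set M := m%:R : R.
    have M0 : 0 < M by rewrite /M ltr0n.
    have MK : K < M * d3.
      have := truncnS_gt (K / d3); rewrite ltr_pdivrMr // => H.
      apply: (lt_le_trans H); rewrite ler_pM2r // /M ler_nat.
      by apply: leq_trans Nm; apply: leq_maxr.
    have -> : g m = expR (M^-1 * ln (f (fun i => expR (M * w ord0 i)) j)).
      rewrite /g.
      have -> : (fun i => x i ^+ m) = (fun i => expR (M * w ord0 i)).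
        by apply: funext => i; rewrite /x -expRM_natl.
      rewrite /powR gt_eqF //.
      apply: Hpos; move=> i; apply: expR_gt0.
    set y := fun i => expR (M * w ord0 i).
    set y' := E M w'.
    have py : posvec y by move=> i; apply: expR_gt0.
    have py' : posvec y' by move=> i; apply: expR_gt0.
    have hw : forall i, M * w ord0 i - M * d3 <= M * w' ord0 i <= M * w ord0 i + M * d3.
      move=> i; have := Hw' i => /[dup] /ltr_normlW h1 /ltrNnormlW h2.
      apply/andP; split; nra.
    have e1 : forall i, y i <= expR (M * d3) * y' i.
      by move=> i; rewrite /y /y' /E -expRD ler_expR; have /andP[h _] := hw i; lra.
    have e2 : forall i, y' i <= expR (M * d3) * y i.
      by move=> i; rewrite /y /y' /E -expRD ler_expR; have /andP[_ h] := hw i; lra.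
    have fy0 : 0 < f y j := Hpos y py j.
    have fy'0 : 0 < f y' j := Hpos y' py' j.
    have h1 : ln (f y j) <= M * d3 + ln (f y' j).
      rewrite -[M * d3]expRK -lnM ?posrE ?expR_gt0 //.
      by apply: ln_le => //; exact: (hom_mono y y' (expR (M * d3)) py py' (expR_gt0 _) e1 j).
    have h4 : ln (f y' j) <= M * d3 + ln (f y j).
      rewrite -[M * d3]expRK -lnM ?posrE ?expR_gt0 //.
      by apply: ln_le => //; exact: (hom_mono y' y (expR (M * d3)) py' py (expR_gt0 _) e2 j).
    case: sl => _ [sl1 sl2].
    have h2 : ln (f y' j) <= ln lam + M * w' ord0 j.
      rewrite -[M * w' ord0 j]expRK -lnM ?posrE ?expR_gt0 //.
      by apply: ln_le => //; apply: sl2.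
    have h3 : ln mu + M * w' ord0 j <= ln (f y' j).
      rewrite -[M * w' ord0 j]expRK -lnM ?posrE ?expR_gt0 //.
      by apply: ln_le; [apply: mulr_gt0 => //; apply: expR_gt0|apply: sl1].
    have hl1 : ln lam <= `|ln lam| := ler_norm _.
    have hl2 : - ln mu <= `|ln mu| by rewrite -normrN; apply: ler_norm.
    have /andP [hw1 hw2] := hw j.
    have d3d : d = 3 * d3 by rewrite /d3 mulrC divfK.
    have up : ln (f y j) <= M * (w ord0 j + d).
      rewrite d3d mulrDr mulrCA; rewrite /K in MK.
      have := normr_ge0 (ln mu); have := normr_ge0 (ln lam); lra.
    have lo : M * (w ord0 j - d) <= ln (f y j).
      rewrite d3d mulrBr mulrCA; rewrite /K in MK.
      have := normr_ge0 (ln mu); have := normr_ge0 (ln lam); lra.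
    apply/andP; split; rewrite ler_expR.
      by rewrite -(ler_pM2l M0) mulrA mulfV ?gt_eqF // mul1r.
    by rewrite -(ler_pM2l M0) mulrA mulfV ?gt_eqF // mul1r.
  have lnU : ln L <= w ord0 j.
    apply/ler_addgt0Pr => e e0; apply: ln_le_of => //.
    apply/ler_addgt0Pr => eta eta0.
    have [m [Hd /andP [_ Hu]]] := C e eta e0 eta0.
    have := ler_norm (L - g m); lra.
  have lnL : w ord0 j <= ln L.
    apply/ler_addgt0Pr => e e0.
    have : w ord0 j - e <= ln L; last by lra.
    apply: le_ln_of => //.
    apply/ler_addgt0Pr => eta eta0.
    have [m [Hd /andP [Hl _]]] := C e eta e0 eta0.
    have := ler_norm (g m - L); rewrite distrC; lra.
  have -> : L = expR (ln L) by rewrite lnK // posrE.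
  by rewrite /x; congr expR; apply/eqP; rewrite eq_le lnU lnL.
have [c [_ xc]] : exists c : R, 0 < c /\ x = (fun _ => c).
  apply: Heig; split => //; exists 1; split => //.
  by apply: funext => i; rewrite mul1r hfx.
have e8 : (0:R) < 8^-1 by rewrite invr_gt0.
have [w'' [[_ [[i1 [j1 [Hi1 Hj1]]] _]] Hw'']] := app 0%N (8^-1) e8.
have eqw : w ord0 i1 = w ord0 j1.
  apply: expR_inj; have := congr1 (fun h => h i1) xc; have := congr1 (fun h => h j1) xc.
  by rewrite /x /= => -> ->.
have := Hw'' i1; have := Hw'' j1; rewrite !ltr_norml => /andP [a1 a2] /andP [b1 b2].
clear xc hfx; lra.
Qed.

End Helpers.


Theorem theorem7 (R : realType) (n : nat) (f : ('I_n -> R) -> ('I_n -> R)) :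
  maps_pos f -> homogeneous_vec f -> monotone_vec f ->
  forall hf : ('I_n -> R) -> ('I_n -> R), is_recession f hf ->
  (forall x, is_eigvec hf x -> exists c : R, 0 < c /\ x = (fun _ => c)) ->
  forall lam mu : R, 0 < lam -> 0 < mu -> hbounded (slice f lam mu).
Proof.
move=> Hpos Hh Hm hf Hrec Heig lam mu lam0 mu0.
have [B HB] := @osc_bound R n f Hpos Hh Hm hf Hrec Heig lam mu lam0 mu0.
have pB : 0 <= Num.max B 0 by rewrite le_max lexx orbT.
have Bm : B <= Num.max B 0 by rewrite le_max lexx.
exists (Num.max B 0 + Num.max B 0).
move=> y z sy sz; rewrite /dH.
apply: bigmax_le => [|i _]; first by apply: addr_ge0.
apply: bigmax_le => [|j _]; first by apply: addr_ge0.
have [py _] := sy; have [pz _] := sz.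
rewrite !ln_div ?posrE //.
have := HB y sy i j; have := HB z sz j i; lra.
Qed.
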